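(* If $k \geq 9$ and $|q - q_k| < q_k^{-2k-6}$, then $d_{\mathrm{H}}\big(g_{q,k}(\pi_q(A_q)),\ g_{q_k,k}(\pi_{q_k}(A_{q_k}))\big) < q_k^{-2k-4}$.
   Context: $q_k$ is the unique root in $(1,2)$ of $x^k - x^{k-1} - \cdots - x - 1 = 0$. $\pi_q((\epsilon_j)_{j\ge1}) = \sum_{j\ge1}\epsilon_j q^{-j}$ (for sequences over $\{-1,0,1\}$). $g_{q,k}(x) = q^{-k}x + \sum_{j=1}^{k-1}q^{-j}$. $d_{\mathrm{H}}$ is the Hausdorff distance. $W_2 = \{(-1\,0),(0\,{-1}),(00),(01),(10)\}$ and $1^k0^{k+4}W_2^\mathbb{N}$ is the set of sequences over $\{-1,0,1\}$ starting with $k$ ones then $k+4$ zeros whose tail is an infinite concatenation of words from $W_2$. Construction of $A_p$ from a fixed expansion of 1: given $(c_j) \in \{-1,0,1\}^\mathbb{N}$ with $\pi_p((c_j)) = 1$, let $J = \{j : c_j = 0\}$ enumerated $j_0<j_1<\cdots$, $J_{\mathrm{fixed},1} = \{j_n : n=4m+1, m\ge0\}$, $J_{\mathrm{fixed},0} = \{j_n : n = 4m+3, m\ge0\}$; $A_p$ is the set of $(a_j) \in \{0,1\}^\mathbb{N}$ with $a_j = 1$ if $c_j = 1$, $a_j = 0$ if $c_j = -1$, $a_j = 1$ if $j\in J_{\mathrm{fixed},1}$, $a_j = 0$ if $j \in J_{\mathrm{fixed},0}$. Here $A_{q_k}$ is built from $(c_j) = 1^k0^\infty$, and $A_q$ is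 built from an arbitrarily chosen sequence $(c_j) \in 1^k0^{k+4}W_2^\mathbb{N}$ with $\pi_q((c_j)) = 1$ (such a sequence exists for these $k,q$). *)

(* Defs.v *)
From HB Require Import structures.
From mathcomp Require Import all_boot all_order all_algebra.
From mathcomp Require Import all_classical all_reals all_analysis.
Set Implicit Arguments. Unset Strict Implicit. Unset Printing Implicit Defensive.
Import Order.TTheory GRing.Theory Num.Theory.
Local Open Scope classical_set_scope.
Local Open Scope ring_scope.

(* Sequences (eps_j)_{j>=1} are functions nat -> _; index 0 is ignored. *)

Definition piR {R : realType} (q : R) (u : nat -> R) : R :=
  limn (fun n => \sum_(1 <= j < n) (u j * q ^- j)).

(* digit sequences over {-1,0,1} are represented as int-valued sequences *)
Definition piZ {R : realType} (q : R) (c : nat -> int) : R :=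
  piR q (fun j => (c j)%:~R).

Definition piB {R : realType} (q : R) (a : nat -> bool) : R :=
  piR q (fun j => (a j : nat)%:R).

Definition g {R : realType} (q : R) (k : nat) (x : R) : R :=
  q ^- k * x + \sum_(1 <= j < k) q ^- j.

Definition distset {R : realType} (x : R) (B : set R) : R :=
  inf [set `|x - b| | b in B].
Definition dH {R : realType} (A B : set R) : R :=
  Num.max (sup [set distset a B | a in A]) (sup [set distset b A | b in B]).

(* number of zeros of c among indices 1 <= i < j; if c_j = 0, j = j_n with
   n = zcount c j in the increasing enumeration j_0 < j_1 < ... of J *)
Definition zcount (c : nat -> int) (j : nat) : nat :=
  \sum_(1 <= i < j) (c i == 0).

(* A_p built from the expansion c (the set depends only on c) *)
Definition Aset (c : nat -> int) : set (nat -> bool) :=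
  [set a | forall j, (1 <= j)%N ->
     [/\ (c j = 1 -> a j = true),
         (c j = -1 -> a j = false),
         (c j = 0 -> (zcount c j %% 4 = 1)%N -> a j = true)
       & (c j = 0 -> (zcount c j %% 4 = 3)%N -> a j = false)]].

Definition ck (k : nat) (j : nat) : int := if (1 <= j <= k)%N then 1 else 0.

Definition inW2 (x y : int) : Prop :=
  (x, y) = (-1, 0) \/ (x, y) = (0, -1) \/ (x, y) = (0, 0) \/
  (x, y) = (0, 1) \/ (x, y) = (1, 0).

Definition in_1k0W2 (k : nat) (c : nat -> int) : Prop :=
  (forall j, (1 <= j <= k)%N -> c j = 1) /\
  (forall j, (k < j <= 2 * k + 4)%N -> c j = 0) /\
  (forall m, inW2 (c (2 * k + 5 + 2 * m)%N) (c (2 * k + 6 + 2 * m)%N)).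

(* Main.v *)
Require Import Defs.
From HB Require Import structures.
From mathcomp Require Import all_boot all_order all_algebra.
From mathcomp Require Import all_classical all_reals all_analysis.
From mathcomp Require Import ring lra zify.
Import Order.TTheory GRing.Theory Num.Theory.
Import numFieldNormedType.Exports.
Local Open Scope classical_set_scope.
Local Open Scope ring_scope.

Section H.
Variable R : realType.

Lemma telex (x : R) m n : (m <= n)%N ->
  \sum_(m <= j < n) x ^+ j * (1 - x) = x ^+ m - x ^+ n.
Proof.
move=> mn.
have -> : x ^+ m - x ^+ n = (- x ^+ n) - (- x ^+ m) by ring.
apply: (@telescope_sumr_eq _ m n (fun j => - x ^+ j)) => //.
move=> i _; rewrite exprS; ring.
Qed.

Lemma geo_le (x : R) m n : 0 <= x < 1 ->
  \sum_(m <= j < n) x ^+ j <= x ^+ m / (1 - x).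
Proof.
move=> /andP[x0 x1].
have h1 : 0 < 1 - x by rewrite subr_gt0.
case: (leqP m n) => mn; last first.
  rewrite big_geq; last exact: ltnW. apply: divr_ge0; [exact: exprn_ge0|exact: ltW].
rewrite ler_pdivlMr //.
rewrite mulr_suml.
rewrite telex //.
by rewrite gerBl exprn_ge0.
Qed.
Lemma two_geo (lo hi : R) M : 0 < lo -> lo <= hi -> hi < 1 ->
  \sum_(1 <= i < M) `|hi ^+ i - lo ^+ i| <= hi / (1 - hi) - lo / (1 - lo).
Proof.
move=> l0 lh h1.
have hh : 0 < 1 - hi by rewrite subr_gt0.
have hl : 0 < 1 - lo by rewrite subr_gt0; apply: le_lt_trans h1.
have e : forall i, `|hi ^+ i - lo ^+ i| = hi ^+ i - lo ^+ i.
  move=> i; apply/ger0_norm; rewrite subr_ge0; apply: lerXn2r => //;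
  rewrite nnegrE ?(ltW l0) //; exact: le_trans (ltW l0) lh.
under eq_bigr do rewrite e.
rewrite sumrB.
have key : lo / (1 - lo) <= hi / (1 - hi).
  apply: ler_pM; [exact: ltW|by rewrite invr_ge0 ltW|exact: lh|].
  by rewrite lef_pV2 ?posrE //; exact: lerB (lexx 1) lh.
case: (leqP 1 M) => M1; last first.
  rewrite !big_geq; [|exact: ltnW|exact: ltnW]. by rewrite subrr subr_ge0.
have -> : \sum_(1 <= j < M) hi ^+ j = (hi - hi ^+ M) / (1 - hi).
  apply/(canRL (mulfK _)); first by rewrite gt_eqF.
  by rewrite mulr_suml telex // expr1.
have -> : \sum_(1 <= j < M) lo ^+ j = (lo - lo ^+ M) / (1 - lo).
  apply/(canRL (mulfK _)); first by rewrite gt_eqF.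
  by rewrite mulr_suml telex // expr1.
have : lo ^+ M / (1 - lo) <= hi ^+ M / (1 - hi).
  apply: ler_pM; [exact: exprn_ge0 (ltW l0)|by rewrite invr_ge0 ltW| |].
    by apply: lerXn2r => //; rewrite nnegrE ?(ltW l0) //; exact: le_trans (ltW l0) lh.
  by rewrite lef_pV2 ?posrE //; exact: lerB (lexx 1) lh.
rewrite !mulrBl; lra.
Qed.

Lemma two_geo_abs (x y : R) M : 0 < x -> x < 1 -> 0 < y -> y < 1 ->
  \sum_(1 <= i < M) `|x ^+ i - y ^+ i| <= `|x / (1 - x) - y / (1 - y)|.
Proof.
move=> x0 x1 y0 y1; case: (leP x y) => xy.
  under eq_bigr do rewrite distrC.
  rewrite distrC; apply: le_trans (@two_geo x y M x0 xy y1) (ler_norm _).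
apply: le_trans (@two_geo y x M y0 (ltW xy) x1) (ler_norm _).
Qed.

Definition S (p : R) (a : nat -> bool) n := \sum_(1 <= j < n) ((a j : nat)%:R * p ^- j).
Definition G (p : R) k a n := p ^- k * S p a n + \sum_(1 <= j < k) p ^- j.

Lemma S_pow (p : R) a n : S p a n = \sum_(1 <= j < n) ((a j : nat)%:R * (p^-1) ^+ j).
Proof. by apply: eq_bigr => j _; rewrite exprVn. Qed.

Lemma G_pow (p : R) k a n : G p k a n =
  \sum_(1 <= j < k) (p^-1) ^+ j + \sum_(1 <= j < n) ((a j : nat)%:R * (p^-1) ^+ (j + k)).
Proof.
rewrite /G S_pow addrC; congr (_ + _); first by apply: eq_bigr => j _; rewrite exprVn.
rewrite mulr_sumr; apply: eq_bigr => j _; rewrite exprD -exprVn; ring.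
Qed.

Lemma G_diff (p p' : R) k a n : (1 <= k)%N -> 1 < p -> 1 < p' ->
  `|G p k a n - G p' k a n| <= `|p^-1 / (1 - p^-1) - p'^-1 / (1 - p'^-1)|.
Proof.
move=> k1 p1 p'1.
have G01 : forall r, G r k a 0 = G r k a 1 by move=> r; rewrite /G /S (@big_geq _ _ _ 1 0) // (@big_geq _ _ _ 1 1).
suff Hn : forall m, (1 <= m)%N ->
    `|G p k a m - G p' k a m| <= `|p^-1 / (1 - p^-1) - p'^-1 / (1 - p'^-1)|.
  by case: n => [|n]; [rewrite !G01; apply: Hn | apply: Hn].
clear n; move=> n n1.
set x := p^-1; set y := p'^-1.
have x0 : 0 < x by rewrite invr_gt0 (lt_trans ltr01).
have y0 : 0 < y by rewrite invr_gt0 (lt_trans ltr01).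
have x1 : x < 1 by rewrite invf_lt1 // (lt_trans ltr01).
have y1 : y < 1 by rewrite invf_lt1 // (lt_trans ltr01).
apply: le_trans _ (@two_geo_abs x y (n + k) x0 x1 y0 y1).
rewrite !G_pow.
have -> : \sum_(1 <= j < k) x ^+ j + \sum_(1 <= j < n) (a j)%:R * x ^+ (j + k) -
    (\sum_(1 <= j < k) y ^+ j + \sum_(1 <= j < n) (a j)%:R * y ^+ (j + k)) =
    \sum_(1 <= j < k) (x ^+ j - y ^+ j) + \sum_(1 <= j < n) (a j)%:R * (x ^+ (j + k) - y ^+ (j + k)).
  rewrite !sumrB; under [X in _ = _ + X]eq_bigr do rewrite mulrBr. rewrite sumrB; ring.
apply: le_trans (ler_normD _ _) _.
rewrite (@big_cat_nat _ _ _ k 1 (n + k)) //=; last by rewrite leq_addl.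
apply: lerD; first exact: ler_norm_sum.
apply: le_trans (ler_norm_sum _ _ _) _.
rewrite (@big_cat_nat _ _ _ k.+1 k (n + k)) //=; last by rewrite -add1n leq_add2r.
rewrite big_nat1 -(add1n k) big_addn addnK.
apply: (@le_trans _ _ (\sum_(1 <= i < n) `|x ^+ (i + k) - y ^+ (i + k)|)); last first.
  by apply: ler_wpDl; [exact: normr_ge0|exact: lexx].
apply: ler_sum => j _; rewrite normrM.
by case: (a j); rewrite ?normr1 ?mul1r ?normr0 ?mul0r // normr_ge0.
Qed.

Lemma S_tail (p : R) a b N n : 1 < p -> (forall j, (j <= N)%N -> a j = b j) ->
  `|S p a n - S p b n| <= (p^-1) ^+ N.+1 / (1 - p^-1).
Proof.
move=> p1 ab; set y := p^-1.
have y0 : 0 <= y by rewrite invr_ge0 ltW // (lt_trans ltr01).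
have y1 : y < 1 by rewrite invf_lt1 // (lt_trans ltr01).
rewrite !S_pow -sumrB.
apply: le_trans (@geo_le y N.+1 n _); last by rewrite y0 y1.
elim: n => [|n IH].
  by rewrite (@big_geq _ _ _ 1 0) // (@big_geq _ _ _ N.+1 0) // normr0.
case: (posnP n) => [->|n0].
  rewrite (@big_geq _ _ _ 1 1) // normr0; apply: sumr_ge0 => i _; exact: exprn_ge0.
rewrite big_nat_recr //=.
case: (leqP n N) => nN.
  rewrite (ab n nN) subrr addr0 (@big_geq _ _ _ N.+1 n.+1) //.
  by rewrite (@big_geq _ _ _ N.+1 n) ?(leq_trans nN) in IH.
rewrite (@big_nat_recr _ _ _ n N.+1) //=.
apply: le_trans (ler_normD _ _) _; apply: lerD => //.
rewrite -mulrBl normrM (ger0_norm (exprn_ge0 _ y0)).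
rewrite -[X in _ <= X]mul1r; apply: ler_wpM2r; first exact: exprn_ge0.
by case: (a n); case: (b n); rewrite ?subrr ?normr0 ?ler01 //= ?subr0 ?sub0r ?normrN normr1.
Qed.

Lemma S_cvg (p : R) a : 1 < p -> cvgn (S p a).
Proof.
move=> p1; set y := p^-1.
have y0 : 0 <= y by rewrite invr_ge0 ltW // (lt_trans ltr01).
have y1 : y < 1 by rewrite invf_lt1 // (lt_trans ltr01).
apply: nondecreasing_is_cvgn.
  apply/nondecreasing_seqP => n; rewrite !S_pow.
  case: (posnP n) => [->|n0].
    by rewrite (@big_geq _ _ _ 1 0) // (@big_geq _ _ _ 1 1).
  rewrite big_nat_recr //= lerDl; apply: mulr_ge0; [exact: ler0n|exact: exprn_ge0].
exists (y ^+ 1 / (1 - y)) => _ [n _ <-].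
rewrite S_pow; apply: le_trans (@geo_le y 1 n _); last by rewrite y0 y1.
apply: ler_sum => j _; rewrite -[X in _ <= X]mul1r; apply: ler_wpM2r; first exact: exprn_ge0.
by case: (a j).
Qed.

Lemma G_cvg (p : R) k a : 1 < p -> G p k a @ \oo --> g p k (piB p a).
Proof.
move=> p1; rewrite /g /G.
apply: cvgD; last exact: cvg_cst.
apply: cvgMr; exact: S_cvg.
Qed.

Lemma lim_bound (p p' : R) k a b E : 1 < p -> 1 < p' ->
  (forall n, `|G p k a n - G p' k b n| <= E) ->
  `|g p k (piB p a) - g p' k (piB p' b)| <= E.
Proof.
move=> p1 p'1 h.
have c : (fun n => G p k a n - G p' k b n) @ \oo --> g p k (piB p a) - g p' k (piB p' b).
  by apply: cvgB; apply: G_cvg.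
apply: cvgr_to_le (cvg_norm c) _.
exact: nearW.
Qed.
End H.
Arguments G {R}. Arguments S {R}.

Section Sets.
Variables (k : nat) (c : nat -> int).
Hypothesis hc : in_1k0W2 k c.
Let N := (2 * k + 4)%N.

Lemma ck_le j : (1 <= j)%N -> (j <= k)%N -> ck k j = 1.
Proof. by move=> j1 jk; rewrite /ck j1 jk. Qed.

Lemma ck_gt j : (k < j)%N -> ck k j = 0.
Proof. by move=> kj; rewrite /ck; case: ifP => // /andP[_]; rewrite leqNgt kj. Qed.

Lemma c_ck j : (1 <= j)%N -> (j <= N)%N -> c j = ck k j.
Proof.
case: hc => h1 [h2 _] j1 jN; case: (leqP j k) => jk.
  by rewrite ck_le // h1 // j1 jk.
by rewrite ck_gt // h2 // jk jN.
Qed.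

Lemma zc_eq j : (j <= N.+1)%N -> zcount c j = zcount (ck k) j.
Proof.
move=> jN; apply: eq_big_nat => i /andP[i1 ij].
by rewrite c_ck // -ltnS (leq_trans ij).
Qed.

Definition toB (a : nat -> bool) j : bool :=
  if (j <= N)%N then a j else (zcount (ck k) j %% 4 == 1)%N.
Definition toA (b : nat -> bool) j : bool :=
  if (j <= N)%N then b j
  else [|| c j == 1 | (c j == 0) && (zcount c j %% 4 == 1)%N].

Lemma toB_in a : Aset c a -> Aset (ck k) (toB a).
Proof.
move=> Aa j j1; rewrite /toB; case: (leqP j N) => jN.
  rewrite -c_ck // -zc_eq //; last exact: (leq_trans jN).
  exact: Aa.
have kj : (k < j)%N by move: jN; rewrite /N; lia.
rewrite ck_gt //; split.
- by move/eqP.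
- by move/eqP.
- by move=> _ ->.
- by move=> _ ->.
Qed.

Lemma toA_in b : Aset (ck k) b -> Aset c (toA b).
Proof.
move=> Bb j j1; rewrite /toA; case: (leqP j N) => jN.
  rewrite c_ck // zc_eq //; last exact: (leq_trans jN).
  exact: Bb.
split.
- by move=> ->.
- by move=> ->.
- by move=> -> ->.
- by move=> -> ->.
Qed.
End Sets.

Section Num.
Variable R : realType.

Lemma bern (t : R) n : 0 <= t -> 1 + n%:R * t <= (1 + t) ^+ n.
Proof.
move=> t0; elim: n => [|n IH]; first by rewrite mul0r addr0 expr0.
rewrite exprS; apply: le_trans (ler_wpM2l _ IH); last by rewrite addr_ge0.
have := mulr_ge0 (ler0n R n) (mulr_ge0 t0 t0).
rewrite -addn1 natrD; nra.
Qed.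

Lemma qk_bounds (k : nat) (qk : R) : (9 <= k)%N -> 1 < qk -> qk < 2 ->
  qk ^+ k = \sum_(i < k) qk ^+ i -> 17/9 <= qk /\ qk ^- k = 2 - qk.
Proof.
move=> k9 q1 q2 hs.
set P := qk ^+ k.
have e : P * (2 - qk) = 1.
  have h := subrX1 qk k; rewrite -hs -/P in h.
  have -> : P * (2 - qk) = 1 + ((P - 1) - (qk - 1) * P) by ring.
  by rewrite h subrr addr0.
have P0 : P != 0 by rewrite expf_neq0 // gt_eqF // (lt_trans ltr01).
split; last by apply: (mulfI P0); rewrite mulfV // e.
rewrite leNgt; apply/negP => h.
set t := qk - 1.
have t0 : 0 < t by rewrite subr_gt0.
have hb := @bern t k (ltW t0).
have e1 : 1 + t = qk by rewrite /t addrC subrK.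
rewrite e1 -/P in hb.
have K9 : 9 <= k%:R :> R by rewrite (ler_nat R 9 k).
have t1 : t < 8/9 by rewrite /t; lra.
have h1 : 0 <= (P - (1 + k%:R * t)) * (1 - t).
  by apply: mulr_ge0; rewrite subr_ge0 //; lra.
have h2 : 0 < k%:R * (8/9 - t) by apply: mulr_gt0; lra.
have h3 : 0 < t * (k%:R - 1 - k%:R * t) by apply: mulr_gt0; lra.
have e2 : P * (1 - t) = 1 by rewrite -[RHS]e /t; congr (_ * _); ring.
nra.
Qed.
End Num.

Lemma sup_dist_le (R : realType) (A B : set R) e : 0 <= e ->
  (forall x, A x -> exists2 y, B y & `|x - y| <= e) ->
  sup [set distset a B | a in A] <= e.
Proof.
move=> e0 h.
case: (pselect (exists a, A a)) => [[a0 Aa0]|nA]; last first.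
  have -> : [set distset a B | a in A] = set0.
    apply/seteqP; split => [x [a Aa _]|//].
    by exfalso; apply: nA; exists a.
  by rewrite sup0.
apply: ge_sup; first by exists (distset a0 B), a0.
move=> _ [a Aa <-]; have [y By hy] := h a Aa.
apply: le_trans hy; rewrite /distset.
apply: ge_inf; first by exists 0 => _ [b _ <-]; exact: normr_ge0.
by exists y.
Qed.

Theorem lemma4p8 (R : realType) (k : nat) (qk q : R) :
  (9 <= k)%N ->
  1 < qk < 2 -> qk ^+ k = \sum_(i < k) qk ^+ i ->
  `|q - qk| < qk ^- (2 * k + 6) ->
  forall c : nat -> int,
    in_1k0W2 k c -> piZ q c = 1 ->
    dH (g q k @` (piB q @` Aset c)) (g qk k @` (piB qk @` Aset (ck k)))
      < qk ^- (2 * k + 4).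
Proof.
move=> k9 /andP[qk1 qk2] hsum hq c hc _.
have [qk17 hT] := @qk_bounds R k qk k9 qk1 qk2 hsum.
have k1 : (1 <= k)%N by apply: leq_trans k9.
set eps := `|q^-1 / (1 - q^-1) - qk^-1 / (1 - qk^-1)|
   + qk ^- k * ((qk^-1) ^+ (2 * k + 4).+1 / (1 - qk^-1)).
set X := qk ^- (2 * k + 4).
set u := qk^-1.
have qk0 : 0 < qk by apply: lt_trans qk1.
have u0 : 0 < u by rewrite invr_gt0.
have u1 : u <= 9/17.
  rewrite /u -[9/17]invf_div lef_pV2 ?posrE //; lra.
have hX : X = u ^+ (2 * k + 4) by rewrite exprVn.
have X0 : 0 < X by rewrite hX exprn_gt0.
have XT : X <= qk ^- k.
  rewrite hX -exprVn -/u; apply: ler_wiXn2l.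
  - exact: ltW.
  - by apply: (le_trans u1); lra.
  - lia.
have hY : qk ^- (2 * k + 6) = X * u ^+ 2.
  by rewrite hX -exprD -exprVn; congr (_ ^+ _); lia.
have u2 : u ^+ 2 <= 81/289.
  have -> : (81/289 : R) = (9/17) ^+ 2 by rewrite expr2; lra.
  apply: lerXn2r => //; rewrite ?nnegrE; [exact: ltW|lra].
have XY : X * u ^+ 2 <= X * (81/289) by apply: ler_wpM2l => //; exact: ltW.
move: hq; rewrite hY ltr_norml => /andP[hq1 hq2].
have q1 : 1 < q by lra.
have epsX : eps < X.
  have iform : forall p : R, 1 < p -> p^-1 / (1 - p^-1) = (p - 1)^-1.
    move=> p p1; have p0 : p != 0 by rewrite gt_eqF // (lt_trans ltr01).
    have p10 : p - 1 != 0 by rewrite subr_eq0 gt_eqF.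
    have e : 1 - p^-1 = (p - 1) / p by rewrite mulrBl mulfV // div1r.
    by rewrite e invf_div mulrA mulVf // mul1r.
  rewrite /eps /u (iform q q1) (iform qk qk1).
  have e2 : (qk^-1) ^+ (2 * k + 4).+1 / (1 - qk^-1) = X * (qk - 1)^-1.
    by rewrite exprSr -mulrA (iform qk qk1) hX.
  rewrite e2.
  have a1 : 7/9 <= q - 1 by lra.
  have b1 : 8/9 <= qk - 1 by lra.
  have hab : 7/9 * (8/9) <= (q - 1) * (qk - 1) by apply: ler_pM => //; lra.
  have n1 : q - 1 != 0 by rewrite gt_eqF //; lra.
  have n2 : qk - 1 != 0 by rewrite gt_eqF //; lra.
  have eD : (q-1)^-1 - (qk-1)^-1 = (qk - q) / ((q-1)*(qk-1)).
    by field; rewrite n1 n2.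
  have pab : 0 < (q - 1) * (qk - 1) by lra.
  have hD : `|(q-1)^-1 - (qk-1)^-1| <= `|q - qk| * (81/56).
    rewrite eD normrM normfV (gtr0_norm pab) distrC ler_pdivrMr //.
    have := normr_ge0 (q - qk); nra.
  have hd : `|q - qk| < X * (81/289).
    apply: lt_le_trans XY; rewrite ltr_norml; lra.
  have hE : qk ^- k * (X * (qk - 1)^-1) <= 1/9 * (X * (9/8)).
    apply: ler_pM.
    - by rewrite invr_ge0 exprn_ge0 // ltW.
    - by apply: mulr_ge0; [exact: ltW|rewrite invr_ge0; lra].
    - rewrite hT; lra.
    - rewrite ler_pdivrMr; last lra.
      nra.
  lra.

have pair : forall a b, (forall j, (j <= 2 * k + 4)%N -> a j = b j) ->
    `|g q k (piB q a) - g qk k (piB qk b)| <= eps.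
  move=> a b ab; apply: lim_bound => // n.
  apply: le_trans (ler_distD (G qk k a n) _ _) _.
  apply: lerD; first exact: G_diff.
  rewrite /G opprD addrACA subrr addr0 -mulrBr normrM.
  rewrite (ger0_norm (ltW _)); last by rewrite invr_gt0 exprn_gt0 // (lt_trans ltr01).
  apply: ler_wpM2l; first by rewrite invr_ge0 exprn_ge0 // ltW // (lt_trans ltr01).
  exact: S_tail.
have e0 : 0 <= eps by apply: le_trans (pair (fun=> true) (fun=> true) (fun _ _ => erefl)); exact: normr_ge0.
rewrite /dH gt_max; apply/andP; split; apply: le_lt_trans epsX; apply: sup_dist_le => //.
  move=> _ [_ [a Aa <-] <-].
  exists (g qk k (piB qk (toB k a))).
    by exists (piB qk (toB k a)) => //; exists (toB k a) => //; exact: (@toB_in k c hc a Aa).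
  by apply: pair => j jN; rewrite /toB jN.
move=> _ [_ [b Bb <-] <-].
exists (g q k (piB q (toA k c b))).
  by exists (piB q (toA k c b)) => //; exists (toA k c b) => //; exact: (@toA_in k c hc b Bb).
by rewrite distrC; apply: pair => j jN; rewrite /toA jN.
Qed.
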